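(* Let $\mathcal{K}$ be a 2-category and $\mathcal{H}$ a class of 1-cells of $\mathcal{K}$ each of which is a corepresentable surjection. If $X,Y$ are right Kan injective with respect to all maps in $\mathcal{H}$, then every 1-cell $g:X\to Y$ preserves right Kan extensions along all maps in $\mathcal{H}$; and similarly, if $X,Y$ are left Kan injective with respect to all maps in $\mathcal{H}$, every 1-cell $X\to Y$ preserves left Kan extensions along maps in $\mathcal{H}$. Hence $\mathsf{LInj}(\mathcal{H})$ and $\mathsf{RInj}(\mathcal{H})$ are full sub-2-categories of $\mathcal{K}$.
   Context: A 1-cell $f:A\to B$ is a corepresentable surjection if for every object $X$ the functor $-\circ f:\mathcal{K}(B,X)\to\mathcal{K}(A,X)$ is conservative. $X$ is right Kan injective w.r.t. $f:A\to B$ if for every $x:A\to X$ a right Kan extension $\mathsf{ran}_fx$ exists (a 1-cell $B\to X$ with universal 2-cell $\epsilon:\mathsf{ran}_fx\circ f\Rightarrow x$) and $\epsilon$ is invertible; left Kan injectivity is the dual notion (with left Kan extensions and invertible units). A 1-cell $h$ preserves $\mathsf{ran}_fx$ if $(h\circ\mathsf{ran}_fx,h\epsilon)$ is a right Kan extension of $hx$ along $f$. $\mathsf{RInj}(\mathcal{H})$ (resp. $\mathsf{LInj}(\mathcal{H})$) is the locally full sub-2-category of objects right (resp. left) Kan injective w.r.t. all maps in $\mathcal{H}$ and 1-cells preserving these right (resp. left) Kan extensions. *)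

(* Defs.v *)
Definition castc {X : Type} (C : X -> X -> Type) {f f' g g' : X}
  (e1 : f = f') (e2 : g = g') (a : C f g) : C f' g' :=
  match e1 in _ = f0 return C f0 g' with
  | eq_refl => match e2 in _ = g0 return C f g0 with eq_refl => a end
  end.

(* A (strict) 2-category. comp1 g f is "g o f"; cell f g is the type of
   2-cells f => g; vcomp b a is vertical composite "b . a" (first a);
   hcomp b a : g o f => g' o f' for b : g => g', a : f => f'. *)
Record TwoCat := {
  ob : Type;
  hom : ob -> ob -> Type;
  cell : forall {A B : ob}, hom A B -> hom A B -> Type;
  id1 : forall A : ob, hom A A;
  comp1 : forall {A B C : ob}, hom B C -> hom A B -> hom A C;
  id2 : forall {A B : ob} (f : hom A B), cell f f;
  vcomp : forall {A B : ob} {f g h : hom A B}, cell g h -> cell f g -> cell f h;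
  hcomp : forall {A B C : ob} {f f' : hom A B} {g g' : hom B C},
      cell g g' -> cell f f' -> cell (comp1 g f) (comp1 g' f');
  vcompA : forall {A B : ob} {f g h k : hom A B} (c : cell h k) (b : cell g h) (a : cell f g),
      vcomp c (vcomp b a) = vcomp (vcomp c b) a;
  vcomp_id_l : forall {A B : ob} {f g : hom A B} (a : cell f g), vcomp (id2 g) a = a;
  vcomp_id_r : forall {A B : ob} {f g : hom A B} (a : cell f g), vcomp a (id2 f) = a;
  comp1A : forall {A B C D : ob} (h : hom C D) (g : hom B C) (f : hom A B),
      comp1 h (comp1 g f) = comp1 (comp1 h g) f;
  comp1_id_l : forall {A B : ob} (f : hom A B), comp1 (id1 B) f = f;
  comp1_id_r : forall {A B : ob} (f : hom A B), comp1 f (id1 A) = f;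
  hcomp_id : forall {A B C : ob} (f : hom A B) (g : hom B C),
      hcomp (id2 g) (id2 f) = id2 (comp1 g f);
  interchange : forall {A B C : ob} {f f' f'' : hom A B} {g g' g'' : hom B C}
      (b' : cell g' g'') (b : cell g g') (a' : cell f' f'') (a : cell f f'),
      hcomp (vcomp b' b) (vcomp a' a) = vcomp (hcomp b' a') (hcomp b a);
  hcompA : forall {A B C D : ob} {f f' : hom A B} {g g' : hom B C} {h h' : hom C D}
      (c : cell h h') (b : cell g g') (a : cell f f'),
      castc (@cell A D) (comp1A h g f) (comp1A h' g' f') (hcomp c (hcomp b a))
      = hcomp (hcomp c b) a;
  hcomp_id1_l : forall {A B : ob} {f f' : hom A B} (a : cell f f'),
      castc (@cell A B) (comp1_id_l f) (comp1_id_l f') (hcomp (id2 (id1 B)) a) = a;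
  hcomp_id1_r : forall {A B : ob} {f f' : hom A B} (a : cell f f'),
      castc (@cell A B) (comp1_id_r f) (comp1_id_r f') (hcomp a (id2 (id1 A))) = a
}.

Arguments ob : clear implicits.
Arguments hom {_}.
Arguments cell {_ _ _}.
Arguments id1 {_}.
Arguments comp1 {_ _ _ _}.
Arguments id2 {_ _ _}.
Arguments vcomp {_ _ _ _ _ _}.
Arguments hcomp {_ _ _ _ _ _ _ _}.
Arguments comp1A {_ _ _ _ _}.

Section Defs.
Variable K : TwoCat.

Definition whiskerL {A B C : ob K} (h : hom B C) {f f' : hom A B} (a : cell f f')
  : cell (comp1 h f) (comp1 h f') := hcomp (id2 h) a.
Definition whiskerR {A B C : ob K} {g g' : hom B C} (b : cell g g') (f : hom A B)
  : cell (comp1 g f) (comp1 g' f) := hcomp b (id2 f).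

Definition invertible {A B : ob K} {f g : hom A B} (a : cell f g) : Prop :=
  exists b : cell g f, vcomp b a = id2 f /\ vcomp a b = id2 g.

(* f : A -> B is a corepresentable surjection: each - o f : K(B,X) -> K(A,X)
   is conservative (reflects invertibility of 2-cells) *)
Definition corep_surj {A B : ob K} (f : hom A B) : Prop :=
  forall (X : ob K) (g g' : hom B X) (a : cell g g'),
    invertible (whiskerR a f) -> invertible a.

Definition is_ran {A B X : ob K} (f : hom A B) (x : hom A X)
  (r : hom B X) (eps : cell (comp1 r f) x) : Prop :=
  forall (s : hom B X) (b : cell (comp1 s f) x),
    exists! sg : cell s r, vcomp eps (whiskerR sg f) = b.

Definition is_lan {A B X : ob K} (f : hom A B) (x : hom A X)
  (l : hom B X) (eta : cell x (comp1 l f)) : Prop :=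
  forall (s : hom B X) (b : cell x (comp1 s f)),
    exists! sg : cell l s, vcomp (whiskerR sg f) eta = b.

Definition rkan_inj {A B : ob K} (f : hom A B) (X : ob K) : Prop :=
  forall x : hom A X, exists (r : hom B X) (eps : cell (comp1 r f) x),
    is_ran f x r eps /\ invertible eps.

Definition lkan_inj {A B : ob K} (f : hom A B) (X : ob K) : Prop :=
  forall x : hom A X, exists (l : hom B X) (eta : cell x (comp1 l f)),
    is_lan f x l eta /\ invertible eta.

Definition preserves_ran {A B X Y : ob K} (h : hom X Y) (f : hom A B) (x : hom A X)
  : Prop :=
  forall (r : hom B X) (eps : cell (comp1 r f) x),
    is_ran f x r eps ->
    is_ran f (comp1 h x) (comp1 h r)
      (castc (@cell K A Y) (comp1A h r f) eq_refl (whiskerL h eps)).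

Definition preserves_lan {A B X Y : ob K} (h : hom X Y) (f : hom A B) (x : hom A X)
  : Prop :=
  forall (l : hom B X) (eta : cell x (comp1 l f)),
    is_lan f x l eta ->
    is_lan f (comp1 h x) (comp1 h l)
      (castc (@cell K A Y) eq_refl (comp1A h l f) (whiskerL h eta)).

Definition hclass := forall A B : ob K, hom A B -> Prop.

Definition RKInj (H : hclass) (X : ob K) : Prop :=
  forall (A B : ob K) (f : hom A B), H A B f -> rkan_inj f X.
Definition LKInj (H : hclass) (X : ob K) : Prop :=
  forall (A B : ob K) (f : hom A B), H A B f -> lkan_inj f X.

End Defs.

Arguments invertible {K A B f g}.
Arguments corep_surj {K A B}.
Arguments preserves_ran {K A B X Y}.
Arguments preserves_lan {K A B X Y}.
Arguments RKInj {K}.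
Arguments LKInj {K}.

(* Main.v *)
Require Import Defs.

Section S.
Variable K : TwoCat.

Lemma wR_comp {A B C : ob K} {g g' g'' : hom B C} (a : cell g' g'') (b : cell g g') (f : hom A B) :
  whiskerR K (vcomp a b) f = vcomp (whiskerR K a f) (whiskerR K b f).
Proof. unfold whiskerR. rewrite <- interchange, vcomp_id_l. reflexivity. Qed.

Lemma wR_id {A B C : ob K} (g : hom B C) (f : hom A B) :
  whiskerR K (id2 g) f = id2 (comp1 g f).
Proof. unfold whiskerR. apply hcomp_id. Qed.

Lemma wL_comp {A B C : ob K} (h : hom B C) {f f' f'' : hom A B} (a : cell f' f'') (b : cell f f') :
  whiskerL K h (vcomp a b) = vcomp (whiskerL K h a) (whiskerL K h b).
Proof. unfold whiskerL. rewrite <- interchange, vcomp_id_l. reflexivity. Qed.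

Lemma wL_id {A B C : ob K} (h : hom B C) (f : hom A B) :
  whiskerL K h (id2 f) = id2 (comp1 h f).
Proof. unfold whiskerL. apply hcomp_id. Qed.

Lemma inv_wR {A B C : ob K} {g g' : hom B C} (a : cell g g') (f : hom A B) :
  invertible a -> invertible (whiskerR K a f).
Proof.
  intros [b [H1 H2]]. exists (whiskerR K b f).
  rewrite <- !wR_comp, H1, H2, !wR_id. auto.
Qed.

Lemma inv_wL {A B C : ob K} (h : hom B C) {f f' : hom A B} (a : cell f f') :
  invertible a -> invertible (whiskerL K h a).
Proof.
  intros [b [H1 H2]]. exists (whiskerL K h b).
  rewrite <- !wL_comp, H1, H2, !wL_id. auto.
Qed.

Lemma inv_cast {A B : ob K} {f f' g g' : hom A B} (e1 : f = f') (e2 : g = g') (a : cell f g) :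
  invertible a -> invertible (castc (@cell K A B) e1 e2 a).
Proof. destruct e1, e2. simpl. auto. Qed.

Lemma inv_comp {A B : ob K} {f g h : hom A B} (a : cell g h) (b : cell f g) :
  invertible a -> invertible b -> invertible (vcomp a b).
Proof.
  intros [a' [Ha1 Ha2]] [b' [Hb1 Hb2]]. exists (vcomp b' a'). split.
  - rewrite <- vcompA, (vcompA _ a' a b), Ha1, vcomp_id_l. auto.
  - rewrite <- vcompA, (vcompA _ b b' a'), Hb2, vcomp_id_l. auto.
Qed.

Lemma inv_right {A B : ob K} {f g h : hom A B} (a : cell g h) (b : cell f g) :
  invertible (vcomp a b) -> invertible a -> invertible b.
Proof.
  intros Hab Ha. destruct Ha as [a' [Ha1 Ha2]].
  assert (E : b = vcomp a' (vcomp a b)) by (rewrite vcompA, Ha1, vcomp_id_l; auto).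
  rewrite E. apply inv_comp; auto. exists a. auto.
Qed.

Lemma inv_left {A B : ob K} {f g h : hom A B} (a : cell g h) (b : cell f g) :
  invertible (vcomp a b) -> invertible b -> invertible a.
Proof.
  intros Hab Hb. destruct Hb as [b' [Hb1 Hb2]].
  assert (E : a = vcomp (vcomp a b) b') by (rewrite <- vcompA, Hb2, vcomp_id_r; auto).
  rewrite E. apply inv_comp; auto. exists b. auto.
Qed.

Lemma ran_of_iso {A B X : ob K} (f : hom A B) (x : hom A X) (R r2 : hom B X)
  (E : cell (comp1 R f) x) (g : cell (comp1 r2 f) x) :
  corep_surj f -> is_ran K f x R E -> invertible E -> invertible g -> is_ran K f x r2 g.
Proof.
  intros Hcs HR HE Hg.
  destruct (HR r2 g) as [s [Hs _]].
  assert (Hsi : invertible s).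
  { apply (Hcs X). apply (inv_right E). rewrite Hs; auto. auto. }
  destruct Hsi as [si [Hs1 Hs2]].
  intros t b. destruct (HR t b) as [rho [Hrho Hu]].
  exists (vcomp si rho). split.
  - rewrite <- Hs, wR_comp, <- vcompA, (vcompA _ (whiskerR K s f)), <- wR_comp, Hs2,
      wR_id, vcomp_id_l. auto.
  - intros sg' Hsg'.
    assert (Q : vcomp s sg' = rho).
    { symmetry. apply Hu. rewrite wR_comp, vcompA, Hs. auto. }
    rewrite <- Q, vcompA, Hs1, vcomp_id_l. auto.
Qed.

Lemma ran_eps_inv {A B X : ob K} (f : hom A B) (x : hom A X) (r : hom B X)
  (eps : cell (comp1 r f) x) :
  rkan_inj K f X -> is_ran K f x r eps -> invertible eps.
Proof.
  intros Hinj Hr. destruct (Hinj x) as [r' [e' [Hr' He']]].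
  destruct (Hr r' e') as [t [Ht _]].
  destruct (Hr' r eps) as [s [Hs _]].
  assert (T1 : vcomp t s = id2 r).
  { destruct (Hr r eps) as [u [_ Hu]].
    rewrite <- (Hu (vcomp t s)), <- (Hu (id2 r)); auto.
    - rewrite wR_id, vcomp_id_r. auto.
    - rewrite wR_comp, vcompA, Ht, Hs. auto. }
  assert (T2 : vcomp s t = id2 r').
  { destruct (Hr' r' e') as [u [_ Hu]].
    rewrite <- (Hu (vcomp s t)), <- (Hu (id2 r')); auto.
    - rewrite wR_id, vcomp_id_r. auto.
    - rewrite wR_comp, vcompA, Hs, Ht. auto. }
  rewrite <- Hs. apply inv_comp; auto. apply inv_wR. exists t. auto.
Qed.

Lemma lan_of_iso {A B X : ob K} (f : hom A B) (x : hom A X) (R l2 : hom B X)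
  (E : cell x (comp1 R f)) (g : cell x (comp1 l2 f)) :
  corep_surj f -> is_lan K f x R E -> invertible E -> invertible g -> is_lan K f x l2 g.
Proof.
  intros Hcs HR HE Hg.
  destruct (HR l2 g) as [s [Hs _]].
  assert (Hsi : invertible s).
  { apply (Hcs X). apply (inv_left _ E). rewrite Hs; auto. auto. }
  destruct Hsi as [si [Hs1 Hs2]].
  intros t b. destruct (HR t b) as [rho [Hrho Hu]].
  exists (vcomp rho si). split.
  - rewrite <- Hs, wR_comp, <- vcompA, (vcompA _ (whiskerR K si f)), <- wR_comp, Hs1,
      wR_id, vcomp_id_l. auto.
  - intros sg' Hsg'.
    assert (Q : vcomp sg' s = rho).
    { symmetry. apply Hu. rewrite wR_comp, <- vcompA, Hs. auto. }
    rewrite <- Q, <- vcompA, Hs2, vcomp_id_r. auto.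
Qed.

Lemma lan_eta_inv {A B X : ob K} (f : hom A B) (x : hom A X) (l : hom B X)
  (eta : cell x (comp1 l f)) :
  lkan_inj K f X -> is_lan K f x l eta -> invertible eta.
Proof.
  intros Hinj Hl. destruct (Hinj x) as [l' [e' [Hl' He']]].
  destruct (Hl l' e') as [t [Ht _]].
  destruct (Hl' l eta) as [s [Hs _]].
  assert (T1 : vcomp s t = id2 l).
  { destruct (Hl l eta) as [u [_ Hu]].
    rewrite <- (Hu (vcomp s t)), <- (Hu (id2 l)); auto.
    - rewrite wR_id, vcomp_id_l. auto.
    - rewrite wR_comp, <- vcompA, Ht, Hs. auto. }
  assert (T2 : vcomp t s = id2 l').
  { destruct (Hl' l' e') as [u [_ Hu]].
    rewrite <- (Hu (vcomp t s)), <- (Hu (id2 l')); auto.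
    - rewrite wR_id, vcomp_id_l. auto.
    - rewrite wR_comp, <- vcompA, Hs, Ht. auto. }
  rewrite <- Hs. apply inv_comp; auto. apply inv_wR. exists t. auto.
Qed.

End S.

Theorem proposition2p3p3 (K : TwoCat) (H : hclass K)
  (Hcs : forall (A B : ob K) (f : hom A B), H A B f -> corep_surj f) :
  (forall (X Y : ob K), RKInj H X -> RKInj H Y ->
     forall (g : hom X Y) (A B : ob K) (f : hom A B), H A B f ->
       forall x : hom A X, preserves_ran g f x)
  /\
  (forall (X Y : ob K), LKInj H X -> LKInj H Y ->
     forall (g : hom X Y) (A B : ob K) (f : hom A B), H A B f ->
       forall x : hom A X, preserves_lan g f x).
Proof.
  split.
  - intros X Y HX HY g A B f Hf x r eps Hr.
    pose proof (ran_eps_inv K f x r eps (HX A B f Hf) Hr) as Hi.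
    destruct (HY A B f Hf (comp1 g x)) as [R [E [HR HE]]].
    apply (ran_of_iso K f _ R _ E); auto.
    apply inv_cast, inv_wL; auto.
  - intros X Y HX HY g A B f Hf x l eta Hl.
    pose proof (lan_eta_inv K f x l eta (HX A B f Hf) Hl) as Hi.
    destruct (HY A B f Hf (comp1 g x)) as [R [E [HR HE]]].
    apply (lan_of_iso K f _ R _ E); auto.
    apply inv_cast, inv_wL; auto.
Qed.
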